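(* For every instance $(V,E,\mu,S^* )$ of Rank Minimization, the minimum over valid partitions $(S_1,\dots,S_c,S^* )$ of the rank $1+|\{i:\mu(S_i)>\mu(S^* )\}|$ equals $1+C_l$, where $C_l$ is the number of connected components of the graph $G\setminus S^*$ that contain a vertex $v$ with $\mu(\{v\})>\mu(S^* )$.
   Context: $V$ is a finite set, $E\subseteq V\times V$ reflexive and symmetric, viewed as a simple undirected graph $G=(V,E)$; $\mu:2^V\to[0,\infty)$ is additive with $\mu(S)=0$ only for $S=\emptyset$; $\mathcal{S}$ is the set of nonempty subsets inducing connected subgraphs of $G$; $S^*\in\mathcal{S}\cup\{\emptyset\}$. $G\setminus S^*$ is the graph on $V\setminus S^*$ with all edges incident to $S^*$ removed. A valid partition is a partition $(S_1,\dots,S_c,S^* )$ of $V$ with all $S_i\in\mathcal{S}$. *)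

(* Defs.v *)
From HB Require Import structures.
From mathcomp Require Import all_boot all_order all_algebra.
Set Implicit Arguments. Unset Strict Implicit. Unset Printing Implicit Defensive.
Import Order.TTheory GRing.Theory Num.Theory.
Local Open Scope ring_scope.

Definition induced_rel (V : finType) (E : rel V) (S : {set V}) : rel V :=
  [rel x y | [&& E x y, x \in S & y \in S]].

Definition conn_set (V : finType) (E : rel V) (S : {set V}) : Prop :=
  S != set0 /\ forall x y, x \in S -> y \in S -> connect (induced_rel E S) x y.

Definition measure_ok (R : realDomainType) (V : finType) (mu : {set V} -> R) : Prop :=
  (forall S, 0 <= mu S) /\
  (forall A B : {set V}, [disjoint A & B] -> mu (A :|: B) = mu A + mu B) /\
  (forall S, mu S = 0 -> S = set0).

(* (S_1,...,S_c,S* ) is a valid partition of V: the blocks S_i (a set P of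
   blocks) are in \mathcal S, pairwise disjoint, disjoint from S*, and together
   with S* they cover V. *)
Definition valid_partition (V : finType) (E : rel V) (Sstar : {set V})
    (P : {set {set V}}) : Prop :=
  (forall B, B \in P -> conn_set E B) /\ trivIset P /\ cover P = ~: Sstar.

Definition prank (R : realDomainType) (V : finType) (mu : {set V} -> R)
    (Sstar : {set V}) (P : {set {set V}}) : nat :=
  1 + #|[set B in P | mu Sstar < mu B]|.

Definition components_minus (V : finType) (E : rel V) (Sstar : {set V})
    : {set {set V}} :=
  [set [set y | connect (induced_rel E (~: Sstar)) x y] | x in ~: Sstar].

Definition C_l (R : realDomainType) (V : finType) (E : rel V) (mu : {set V} -> R)
    (Sstar : {set V}) : nat :=
  #|[set C in components_minus E Sstar | [exists v in C, mu Sstar < mu [set v]]]|.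

(* Main.v *)
Require Import Defs.
From HB Require Import structures.
From mathcomp Require Import all_boot all_order all_algebra.
From mathcomp Require Import lra.
Import Order.TTheory GRing.Theory Num.Theory.
Set Implicit Arguments. Unset Strict Implicit.
Local Open Scope ring_scope.

Lemma mu_mono (R : realDomainType) (V : finType) (mu : {set V} -> R) (A B : {set V}) :
  measure_ok mu -> A \subset B -> mu A <= mu B.
Proof.
case=> pos [add _] sAB.
have -> : B = A :|: (B :\: A).
  apply/setP => x; rewrite !inE; case xA: (x \in A) => //=.
  by rewrite (subsetP sAB).
rewrite add; last by rewrite disjoints_subset; apply/subsetP => x xA; rewrite !inE xA.
have := pos (B :\: A); lra.
Qed.

Lemma path_out (V : finType) (E : rel V) (S : {set V}) x p :
  x \in ~: S -> path (induced_rel E (~: S)) x p -> last x p \in ~: S.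
Proof.
elim: p x => //= a p IH x xS /andP[/and3P[_ _ aS] pa]; exact: IH.
Qed.

Lemma connect_out (V : finType) (E : rel V) (S : {set V}) x y :
  x \in ~: S -> connect (induced_rel E (~: S)) x y -> y \in ~: S.
Proof. move=> xS; case/connectP => p pp ->. apply: path_out xS pp. Qed.

Lemma ind_sym (V : finType) (E : rel V) (S : {set V}) :
  symmetric E -> connect_sym (induced_rel E S).
Proof.
move=> sE; apply: sym_connect_sym => a b; rewrite /induced_rel /= sE.
by case: (a \in S); case: (b \in S); rewrite ?andbF.
Qed.

Definition comp (V : finType) (E : rel V) (S : {set V}) x :=
  [set y | connect (induced_rel E (~: S)) x y].

Lemma comp_eq (V : finType) (E : rel V) (S : {set V}) x y :
  symmetric E -> connect (induced_rel E (~: S)) x y ->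
  comp E S x = comp E S y.
Proof.
move=> sE cxy.
have se : connect_sym (induced_rel E (~: S)).
  exact: ind_sym.
apply/setP => z; rewrite !inE; apply/idP/idP => h.
  by apply: connect_trans h; rewrite se.
exact: connect_trans h.
Qed.

Lemma comp_conn (V : finType) (E : rel V) (S : {set V}) x :
  symmetric E ->
  forall y z, y \in comp E S x -> z \in comp E S x -> connect (induced_rel E (comp E S x)) y z.
Proof.
move=> sE; set C := comp E S x.
have key : forall p w, w \in C -> path (induced_rel E (~: S)) w p ->
    connect (induced_rel E C) w (last w p).
  elim=> [|a p IH] w wC //= /andP[ewa pa].
  have aC : a \in C.
    by rewrite inE; apply: connect_trans (connect1 ewa); rewrite inE in wC.
  apply: connect_trans (IH a aC pa); apply: connect1.
  by rewrite /induced_rel /=; move: ewa => /and3P[-> _ _]; rewrite wC aC.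
have se : connect_sym (induced_rel E C).
  exact: ind_sym.
have fromx : forall y, y \in C -> connect (induced_rel E C) x y.
  move=> y; rewrite inE => /connectP[p pp ->]; apply: key => //.
  by rewrite inE connect0.
move=> y z yC zC; apply: connect_trans (fromx z zC); rewrite se; exact: fromx.
Qed.

Theorem corollary2p5 (R : realDomainType) (V : finType) (E : rel V)
    (mu : {set V} -> R) (Sstar : {set V}) :
  reflexive E -> symmetric E -> measure_ok mu ->
  (Sstar = set0 \/ conn_set E Sstar) ->
  (exists P, valid_partition E Sstar P /\ prank mu Sstar P = (1 + C_l E mu Sstar)%N) /\
  (forall P, valid_partition E Sstar P -> (1 + C_l E mu Sstar <= prank mu Sstar P)%N).
Proof.
move=> rE sE muok _.
have se : connect_sym (induced_rel E (~: Sstar)) := ind_sym (~: Sstar) sE.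
set H := [set C in components_minus E Sstar | [exists v in C, mu Sstar < mu [set v]]].
have compP : forall C, C \in components_minus E Sstar ->
    exists2 x, x \in ~: Sstar & C = comp E Sstar x.
  by move=> C /imsetP[x xS ->]; exists x.
have comp_sub : forall x, x \in ~: Sstar -> comp E Sstar x \subset ~: Sstar.
  move=> x xS; apply/subsetP => y; rewrite inE; exact: connect_out.
have heavy_mu : forall B : {set V}, [exists v in B, mu Sstar < mu [set v]] -> mu Sstar < mu B.
  move=> B /exists_inP[v vB hv]; apply: lt_le_trans hv (mu_mono muok _).
  by rewrite sub1set.
split.
- set L := ~: Sstar :\: cover H.
  exists (H :|: [set [set v] | v in L]).
  have memP : forall B, B \in H :|: [set [set v] | v in L] ->
      (B \in H) \/ exists2 v, v \in L & B = [set v].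
    move=> B; rewrite inE => /orP[->|/imsetP[v vL ->]]; [by left|by right; exists v].
  split; first split.
  + move=> B /memP[|[v vL ->]].
      rewrite inE => /andP[/compP[x xS ->] _]; split.
        by apply/set0Pn; exists x; rewrite inE connect0.
      exact: comp_conn.
    split; first by apply/set0Pn; exists v; rewrite inE.
    by move=> y z; rewrite !inE => /eqP-> /eqP->; exact: connect0.
  + split.
    * apply/trivIsetP => A B /memP hA /memP hB neq.
      case: hA => [AH|[v vL Av]]; case: hB => [BH|[w wL Bw]].
      - move: AH BH neq; rewrite !inE => /andP[/compP[x xS ->] _] /andP[/compP[y yS ->] _] neq.
        rewrite -setI_eq0; apply/eqP/setP => z; rewrite !inE.
        apply/negbTE/negP => /andP[cxz cyz]; move: neq.
        by rewrite (comp_eq sE cxz) (comp_eq sE cyz) eqxx.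
      - rewrite Bw disjoint_sym disjoints1; apply/negP => wA.
        move: wL => /setDP[_ /negP]; apply; rewrite /cover; apply/bigcupP; exists A => //.
      - rewrite Av disjoints1; apply/negP => vB.
        move: vL => /setDP[_ /negP]; apply; rewrite /cover; apply/bigcupP; exists B => //.
      - rewrite Av Bw disjoints1 inE; apply: contra neq => /eqP vw.
        by rewrite Av Bw vw.
    * apply/setP => y; rewrite /cover; apply/bigcupP/idP.
        case=> B /memP[BH|[v vL ->]] yB.
          move: BH; rewrite inE => /andP[/compP[x xS Bx] _].
          by move: yB; rewrite Bx; apply/subsetP; apply: comp_sub.
        by move: yB; rewrite inE => /eqP->; move: vL => /setDP[].
      move=> yS; case: (boolP (y \in \bigcup_(B in H) B)) => [/bigcupP[B BH yB]|ny].
        by exists B => //; rewrite inE BH.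
      exists [set y]; last by rewrite inE.
      by rewrite inE; apply/orP; right; apply/imsetP; exists y => //; apply/setDP; split.
  + rewrite /prank; have -> : [set B in H :|: [set [set v] | v in L] | mu Sstar < mu B] = H.
      apply/setP => B; rewrite inE; apply/andP/idP.
        case=> /memP[//|[v vL ->]] hv; exfalso.
        have vS : v \in ~: Sstar by move: vL => /setDP[].
        have cH : comp E Sstar v \in H.
          rewrite inE; apply/andP; split; first by apply/imsetP; exists v.
          by apply/exists_inP; exists v => //; rewrite inE connect0.
        move: vL => /setDP[_ /negP]; apply; rewrite /cover; apply/bigcupP.
        by exists (comp E Sstar v) => //; rewrite inE connect0.
      move=> BH; split; first by rewrite inE BH.
      by apply: heavy_mu; move: BH; rewrite inE => /andP[].
    by [].
- move=> P [Pconn [_ Pcov]].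
  set Hb := [set B in P | mu Sstar < mu B].
  set g := fun B : {set V} => [set y | [exists z in B, connect (induced_rel E (~: Sstar)) z y]].
  have sub : H \subset g @: Hb.
    apply/subsetP => C; rewrite inE => /andP[/imsetP[x xS ->] /exists_inP[v vC hv]].
    have vS : v \in ~: Sstar by apply: (subsetP (comp_sub x xS)).
    have : v \in cover P by rewrite Pcov.
    rewrite /cover => /bigcupP[B BP vB].
    apply/imsetP; exists B.
      rewrite inE BP /=; apply: lt_le_trans hv _; apply: mu_mono muok _.
      by rewrite sub1set.
    have BS : B \subset ~: Sstar by rewrite -Pcov; apply: bigcup_sup.
    move: vC; rewrite inE => vC.
    rewrite -/(comp E Sstar x) (comp_eq sE vC); apply/setP => y; rewrite !inE; apply/idP/exists_inP.
      by move=> cvy; exists v.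
    case=> z zB czy; apply: connect_trans czy.
    have := (Pconn B BP).2 v z vB zB; apply: connect_sub => a b /and3P[eab aB bB].
    by apply: connect1; rewrite /induced_rel /= eab (subsetP BS _ aB) (subsetP BS _ bB).
  rewrite /prank /C_l leq_add2l -/H.
  exact: leq_trans (subset_leq_card sub) (leq_imset_card _ _).
Qed.
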